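(* Let $H$ be a real Hilbert space with inner product $(\cdot,\cdot)_H$ and norm $\|\cdot\|$. Let $\mathcal{L}$ be a symmetric positive definite linear operator on $H$ and $f:H\to\mathbb{R}$ Fréchet differentiable with $\nabla f$ Lipschitz continuous with constant $L$. For each $\Phi\in H$ let $\mathbf{L}(\Phi)=\mathbf{M}(\Phi)+\mathbf{S}(\Phi)$ with $\mathbf{S}(\Phi)$ skew-symmetric and $-\mathbf{M}(\Phi)$ symmetric positive definite, and assume there are constants $\alpha_{\mathbf{M}},\beta_{\mathbf{S}}>0$ such that for all $\Phi,\Psi_1,\Psi_2,\Psi\in H$: $(\mathbf{S}(\Phi)\Psi_1,\Psi_2)_H\le\beta_{\mathbf{S}}\|\Psi_1\|\|\Psi_2\|$ and $(-\mathbf{M}(\Phi)\Psi,\Psi)_H\ge\alpha_{\mathbf{M}}\|\Psi\|^2$. Let $\tau>0$, $A>0$, let $\Phi^{n-1},\Phi^n,\hat\Phi^{n+1}\in H$ be given, and suppose $\Phi^{n+1}$ satisfies the SGE-SBDF2 scheme $$\frac{3\Phi^{n+1}-4\Phi^n+\Phi^{n-1}}{2\tau}=\mathbf{L}(\hat\Phi^{n+1})\mu^{n+1},\quad \mu^{n+1}=\mathcal{L}\Phi^{n+1}-\tau A\,\mathbf{M}(\hat\Phi^{n+1})(3\Phi^{n+1}-4\Phi^n+\Phi^{n-1})+2\nabla f(\Phi^n)-\nabla f(\Phi^{n-1}).$$ Let $c=\big(1+\frac{\beta_{\mathbf{S}}}{\alpha_{\mathbf{M}}}\big)^{-1}$ and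 define $$\tilde E_{BDF2}(\Phi^{k+1},\Phi^k)=\tfrac14\|\mathcal{L}^{1/2}\Phi^{k+1}\|^2+\tfrac14\|\mathcal{L}^{1/2}(2\Phi^{k+1}-\Phi^k)\|^2+\tfrac32f(\Phi^{k+1})-\tfrac12f(\Phi^k)+\big(\tfrac{3L}{2}+\sqrt{2A}\,c\big)\|\Phi^{k+1}-\Phi^k\|^2.$$ Then, provided $A\ge\frac{9L^2}{8}\big(1+\frac{\beta_{\mathbf{S}}}{\alpha_{\mathbf{M}}}\big)^2$ (so that all coefficients on the right below are nonpositive), $$\tilde E_{BDF2}(\Phi^{n+1},\Phi^n)-\tilde E_{BDF2}(\Phi^n,\Phi^{n-1})\le-\big(2\sqrt{2A}\,c-3L\big)\|\Phi^{n+1}-\Phi^n\|^2-\tfrac32\sqrt{2A}\,c\,\|d_{tt}\Phi^n\|^2-\tfrac14\|\mathcal{L}^{1/2}d_{tt}\Phi^n\|^2,$$ where $d_{tt}\Phi^n=\Phi^{n+1}-2\Phi^n+\Phi^{n-1}$.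
   Context: $\|\mathcal{L}^{1/2}\Phi\|^2=(\Phi,\mathcal{L}\Phi)_H$. Skew-symmetric: $(\mathbf{S}\Phi,\Psi)_H=-(\Phi,\mathbf{S}\Psi)_H$. *)

(* Defs.v *)
From HB Require Import structures.
From mathcomp Require Import all_boot all_order all_algebra.
From mathcomp Require Import reals.
Set Implicit Arguments. Unset Strict Implicit. Unset Printing Implicit Defensive.
Import Order.TTheory GRing.Theory Num.Theory.
Local Open Scope ring_scope.

Section Hilbert.
Variables (R : realType) (V : lmodType R).

Definition is_inner_product (ip : V -> V -> R) : Prop :=
  [/\ (forall x y, ip x y = ip y x),
      (forall a x y z, ip (a *: x + y) z = a * ip x z + ip y z),
      (forall x, 0 <= ip x x) &
      (forall x, ip x x = 0 -> x = 0)].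

Definition ipnorm (ip : V -> V -> R) (x : V) : R := Num.sqrt (ip x x).

Definition ip_complete (ip : V -> V -> R) : Prop :=
  forall u : nat -> V,
    (forall e : R, 0 < e -> exists N : nat, forall m n : nat,
        (N <= m)%N -> (N <= n)%N -> ipnorm ip (u m - u n) < e) ->
    exists l : V, forall e : R, 0 < e -> exists N : nat, forall n : nat,
        (N <= n)%N -> ipnorm ip (u n - l) < e.

Definition is_hilbert (ip : V -> V -> R) : Prop :=
  is_inner_product ip /\ ip_complete ip.

Definition op_symmetric (ip : V -> V -> R) (T : V -> V) : Prop :=
  forall x y, ip (T x) y = ip x (T y).

Definition op_skew (ip : V -> V -> R) (T : V -> V) : Prop :=
  forall x y, ip (T x) y = - ip x (T y).

Definition op_posdef (ip : V -> V -> R) (T : V -> V) : Prop :=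
  forall x, x != 0 -> 0 < ip x (T x).

Definition is_gradient (ip : V -> V -> R) (f : V -> R) (g : V -> V) : Prop :=
  forall x : V, forall e : R, 0 < e -> exists d : R, 0 < d /\
    forall y : V, ipnorm ip (y - x) < d ->
      `|f y - f x - ip (g x) (y - x)| <= e * ipnorm ip (y - x).

Definition lipschitz_with (ip : V -> V -> R) (g : V -> V) (L : R) : Prop :=
  forall x y, ipnorm ip (g x - g y) <= L * ipnorm ip (x - y).

(* ||L^{1/2} x||^2 := (x, L x) *)
Definition half_sq (ip : V -> V -> R) (Lop : V -> V) (x : V) : R := ip x (Lop x).

Definition E_BDF2 (ip : V -> V -> R) (Lop : V -> V) (f : V -> R)
    (L A c : R) (P1 P0 : V) : R :=
  4^-1 * half_sq ip Lop P1 + 4^-1 * half_sq ip Lop (2 *: P1 - P0)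
  + 3 / 2 * f P1 - 2^-1 * f P0
  + (3 * L / 2 + Num.sqrt (2 * A) * c) * ipnorm ip (P1 - P0) ^+ 2.

End Hilbert.

(* Main.v *)
Require Import Defs.
From HB Require Import structures.
From mathcomp Require Import all_boot all_order all_algebra.
From mathcomp Require Import classical_sets reals.
From mathcomp Require Import ring lra.
Import Order.TTheory GRing.Theory Num.Theory.
Local Open Scope ring_scope.


Lemma eqle {R : realType} (x y : R) : x = y -> x <= y.
Proof. by move->. Qed.

Lemma B0l {R : realType} {V : lmodType R} {B : V -> V -> R}
  (hl : forall a x y z, B (a*:x+y) z = a * B x z + B y z) z : B 0 z = 0.
Proof. have := hl 1 0 0 z. rewrite scale1r addr0 mul1r => H. lra. Qed.

Lemma BDl {R : realType} {V : lmodType R} {B : V -> V -> R}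
  (hl : forall a x y z, B (a*:x+y) z = a * B x z + B y z) x y z :
  B (x + y) z = B x z + B y z.
Proof. by have := hl 1 x y z; rewrite scale1r mul1r. Qed.

Lemma BZl {R : realType} {V : lmodType R} {B : V -> V -> R}
  (hl : forall a x y z, B (a*:x+y) z = a * B x z + B y z) a x z :
  B (a *: x) z = a * B x z.
Proof. by have := hl a x 0 z; rewrite addr0 (B0l hl) addr0. Qed.

Lemma BNl {R : realType} {V : lmodType R} {B : V -> V -> R}
  (hl : forall a x y z, B (a*:x+y) z = a * B x z + B y z) x z :
  B (- x) z = - B x z.
Proof. by rewrite -scaleN1r (BZl hl) mulN1r. Qed.

Lemma BDr {R : realType} {V : lmodType R} {B : V -> V -> R}
  (hs : forall x y, B x y = B y x)
  (hl : forall a x y z, B (a*:x+y) z = a * B x z + B y z) x y z :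
  B z (x + y) = B z x + B z y.
Proof. by rewrite hs (BDl hl) !(hs z). Qed.

Lemma BZr {R : realType} {V : lmodType R} {B : V -> V -> R}
  (hs : forall x y, B x y = B y x)
  (hl : forall a x y z, B (a*:x+y) z = a * B x z + B y z) a x z :
  B z (a *: x) = a * B z x.
Proof. by rewrite hs (BZl hl) (hs z). Qed.

Lemma BNr {R : realType} {V : lmodType R} {B : V -> V -> R}
  (hs : forall x y, B x y = B y x)
  (hl : forall a x y z, B (a*:x+y) z = a * B x z + B y z) x z :
  B z (- x) = - B z x.
Proof. by rewrite hs (BNl hl) (hs z). Qed.

Lemma B0r {R : realType} {V : lmodType R} {B : V -> V -> R}
  (hs : forall x y, B x y = B y x)
  (hl : forall a x y z, B (a*:x+y) z = a * B x z + B y z) z : B z 0 = 0.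
Proof. by rewrite hs (B0l hl). Qed.

Lemma Bamgm {R : realType} {V : lmodType R} {B : V -> V -> R}
  (hs : forall x y, B x y = B y x)
  (hl : forall a x y z, B (a*:x+y) z = a * B x z + B y z)
  (hp : forall x, 0 <= B x x) p x y :
  2 * p * B x y <= p ^+ 2 * B x x + B y y.
Proof.
have := hp (p *: x - y).
rewrite !(BDl hl, BNl hl, BZl hl, BDr hs hl, BNr hs hl, BZr hs hl) (hs y x).
move=> H; nra.
Qed.

Lemma ipnorm_ge0 {R : realType} {V : lmodType R} (ip : V -> V -> R) x :
  0 <= ipnorm ip x.
Proof. exact: sqrtr_ge0. Qed.

Lemma ipnorm_sq {R : realType} {V : lmodType R} (ip : V -> V -> R) x :
  is_inner_product ip -> ipnorm ip x ^+ 2 = ip x x.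
Proof. by case=> _ _ hp _; rewrite /ipnorm sqr_sqrtr. Qed.

Lemma ipnormZ {R : realType} {V : lmodType R} (ip : V -> V -> R) a x :
  is_inner_product ip -> ipnorm ip (a *: x) = `|a| * ipnorm ip x.
Proof.
case=> hs hl hp _; rewrite /ipnorm (BZl hl) (BZr hs hl) mulrA -expr2.
by rewrite sqrtrM ?sqr_ge0 // sqrtr_sqr.
Qed.

Lemma ipCS {R : realType} {V : lmodType R} (ip : V -> V -> R) x y :
  is_inner_product ip -> ip x y <= ipnorm ip x * ipnorm ip y.
Proof.
move=> hip; have [hs hl hp hd] := hip.
have nx0 := ipnorm_ge0 ip x; have ny0 := ipnorm_ge0 ip y.
have [ex|nex] := eqVneq (ipnorm ip x) 0.
  have : ip x x = 0 by rewrite -(ipnorm_sq ip x hip) ex expr0n.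
  move/hd => hx0. rewrite hx0 (B0l hl). exact: mulr_ge0 (ipnorm_ge0 _ _) (ipnorm_ge0 _ _).
have [ey|ney] := eqVneq (ipnorm ip y) 0.
  have : ip y y = 0 by rewrite -(ipnorm_sq ip y hip) ey expr0n.
  move/hd => hy0. rewrite hy0 (B0r hs hl). exact: mulr_ge0 (ipnorm_ge0 _ _) (ipnorm_ge0 _ _).
have nxp : 0 < ipnorm ip x by rewrite lt_neqAle eq_sym nex.
have nyp : 0 < ipnorm ip y by rewrite lt_neqAle eq_sym ney.
have := Bamgm hs hl hp (ipnorm ip y / ipnorm ip x) x y.
rewrite -(ipnorm_sq ip x hip) -(ipnorm_sq ip y hip).
set a := ipnorm ip x; set b := ipnorm ip y.
have -> : (b / a) ^+ 2 * a ^+ 2 = b ^+ 2 by field; rewrite nex.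
move=> H.
have H2 : 2 * (b / a) * ip x y <= 2 * (b / a) * (a * b).
  apply: (le_trans H). have -> : 2 * (b / a) * (a * b) = 2 * b ^+ 2 by field; rewrite nex.
  lra.
have pp : 0 < 2 * (b / a) by rewrite mulr_gt0 // divr_gt0.
by rewrite -(ler_pM2l pp).
Qed.
Lemma mono_lemma (R : realType) (phi : R -> R) :
  (forall t, 0 <= t -> t <= 1 -> exists2 d, 0 < d &
     forall s, `|s| < d -> s * (phi (t + s) - phi t) <= 0) ->
  phi 1 <= phi 0.
Proof.
move=> loc.
pose P : set R := fun t => 0 <= t /\ t <= 1 /\ forall s, 0 <= s -> s <= t -> phi s <= phi 0.
have P0 : P 0.
  split; first by []. split; first by [].
  move=> s s0 s1; have -> : s = 0 by apply/eqP; rewrite eq_le s1 s0. by [].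
have hs : has_sup P.
  split; first by exists 0.
  exists 1 => y [_ [? _]]; by [].
pose m := sup P.
have ub := sup_upper_bound hs.
have m0 : 0 <= m by apply: ub.
have m1 : m <= 1.
  have [//|lt1] := leP m 1.
  have lt1' : 0 < m - 1 by rewrite subr_gt0.
  have [e [_ [e1 _]] he] := sup_adherent lt1' hs.
  rewrite -/m in he. lra.
have A : forall s, 0 <= s -> s < m -> phi s <= phi 0.
  move=> s s0 sm.
  have sm' : 0 < m - s by rewrite subr_gt0.
  have [p [_ [_ hp]] he] := sup_adherent sm' hs.
  rewrite -/m in he. apply: hp => //; lra.
have B : phi m <= phi 0.
  have [m00|mpos] := eqVneq m 0; first by rewrite m00.
  have mp : 0 < m by rewrite lt_neqAle eq_sym mpos m0.
  have [d d0 hd] := loc m m0 m1.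
  pose rho := Num.min (d / 2) m.
  have rp : 0 < rho by rewrite lt_min mp andbT divr_gt0.
  have rd : rho <= d / 2 by rewrite ge_min lexx.
  have rm : rho <= m by rewrite ge_min lexx orbT.
  have := hd (- rho).
  rewrite normrN gtr0_norm // => /(_ ltac:(lra)) H.
  have H2 : phi (m - rho) <= phi 0 by apply: A; lra.
  nra.
have C : m = 1.
  apply/eqP; rewrite eq_le m1 /=; rewrite leNgt; apply/negP => lt1.
  have [d d0 hd] := loc m m0 m1.
  pose sg := Num.min (d / 2) (1 - m).
  have sp : 0 < sg by rewrite lt_min subr_gt0 lt1 andbT divr_gt0.
  have sd : sg <= d / 2 by rewrite ge_min lexx.
  have s1 : sg <= 1 - m by rewrite ge_min lexx orbT.
  have Psg : P (m + sg).
    split; first lra. split; first lra.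
    move=> s s0 ss.
    have [sm|ms] := leP s m.
      have [sm2|sm2] := eqVneq s m; first by rewrite sm2.
      apply: A => //; rewrite lt_neqAle sm2 sm. done.
    have := hd (s - m).
    rewrite gtr0_norm ?subr_gt0 // => /(_ ltac:(lra)).
    have -> : m + (s - m) = s by ring.
    move=> H. have hp : 0 < s - m by rewrite subr_gt0.
    have : phi s - phi m <= 0 by rewrite -(pmulr_rle0 _ hp).
    move=> X. apply: le_trans B; by rewrite -subr_le0.
  have := ub _ Psg; rewrite -/m =>?; lra.
by rewrite -C.
Qed.

Lemma descent {R : realType} {V : lmodType R} (ip : V -> V -> R) f g L :
  is_inner_product ip -> is_gradient ip f g -> 0 <= L -> lipschitz_with ip g L ->
  forall x y, f y - f x - ip (g x) (y - x) <= L / 2 * ip (y - x) (y - x).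
Proof.
move=> hip hgr L0 hlip x y.
have [hs hl hp hd] := hip.
set h := y - x.
have [h0|hn0] := eqVneq h 0.
  have yx : y = x by apply/eqP; rewrite -subr_eq0 -/h h0.
  rewrite h0 (B0r hs hl) (B0l hl) yx subrr; lra.
have hh : 0 < ip h h.
  rewrite lt_neqAle hp andbT eq_sym; apply/negP => /eqP /hd; exact/eqP.
set nh := ipnorm ip h.
have nhp : 0 < nh by rewrite sqrtr_gt0.
have nh2 : nh ^+ 2 = ip h h by exact: ipnorm_sq.
apply/ler_addgt0Pr => eps ep.
pose phi t := f (x + t *: h) - t * ip (g x) h - L / 2 * t ^+ 2 * ip h h - eps * t.
have : phi 1 <= phi 0.
  apply: mono_lemma => t t0 t1.
  set z := x + t *: h.
  have ep2 : 0 < eps / (2 * nh) by rewrite divr_gt0 // mulr_gt0.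
  have [d0 [d0p hd0]] := hgr z _ ep2.
  have Lhp : 0 < L * ip h h + 1 by nra.
  exists (Num.min (d0 / nh) (eps / (L * ip h h + 1))).
    by rewrite lt_min !divr_gt0.
  move=> s; rewrite lt_min => /andP [s1 s2].
  set y' := z + s *: h.
  have eq1 : x + (t + s) *: h = y' by rewrite scalerDl addrA.
  have eyz : y' - z = s *: h by rewrite /y' addrC addKr.
  have ny : ipnorm ip (y' - z) = `|s| * nh by rewrite eyz ipnormZ.
  have ny' : ipnorm ip (y' - z) < d0 by rewrite ny -ltr_pdivlMr.
  have H1 := hd0 y' ny'.
  rewrite eyz (BZr hs hl) ipnormZ // -/nh in H1.
  set F1 := f y' - f z - s * ip (g z) h in H1.
  have HF : s * F1 <= eps / 2 * s ^+ 2.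
    apply: (le_trans (ler_norm _)); rewrite normrM.
    apply: (le_trans (ler_wpM2l (normr_ge0 s) H1)).
    rewrite -(real_normK (num_real s)); apply: eqle; field; by rewrite gt_eqF.
  have ezx : z - x = t *: h by rewrite /z addrC addKr.
  have H2 : ip (g z) h - ip (g x) h <= L * t * ip h h.
    rewrite -(BNl hl) -(BDl hl).
    apply: (le_trans (ipCS _ _ _ hip)).
    apply: (le_trans (ler_wpM2r (ipnorm_ge0 _ _) (hlip z x))).
    rewrite ezx ipnormZ // ger0_norm // -/nh -nh2; apply: eqle; ring.
  have H2' : s ^+ 2 * (ip (g z) h - ip (g x) h) <= s ^+ 2 * (L * t * ip h h).
    by rewrite ler_wpM2l ?sqr_ge0.
  have H3a : `|s| * (L * ip h h + 1) < eps by rewrite -ltr_pdivlMr.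
  have H3b : - s <= `|s| by rewrite -normrN ler_norm.
  have H3 : 0 <= eps + s * L * ip h h.
    have : 0 <= `|s| * (L * ip h h) by apply: mulr_ge0 => //; apply: mulr_ge0 => //; apply: ltW.
    have Lh : 0 <= L * ip h h by apply: mulr_ge0 => //; apply: ltW.
    have : 0 <= (`|s| + s) * (L * ip h h) by apply: mulr_ge0 => //; lra.
    nra.
  have H3' : 0 <= s ^+ 2 * (eps + s * L * ip h h) by apply: mulr_ge0 => //; apply: sqr_ge0.
  rewrite /phi eq1 -/z.
  have -> : s * (f y' - (t + s) * ip (g x) h - L / 2 * (t + s) ^+ 2 * ip h h - eps * (t + s) -
    (f z - t * ip (g x) h - L / 2 * t ^+ 2 * ip h h - eps * t)) =
    s * F1 + s ^+ 2 * (ip (g z) h - ip (g x) h) - L / 2 * s ^+ 2 * (2 * t + s) * ip h h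
    - eps * s ^+ 2 by rewrite /F1; ring.
  lra.
move=> H.
have e1 : x + 1 *: h = y by rewrite scale1r /h addrC subrK.
have e0 : x + 0 *: h = x by rewrite scale0r addr0.
rewrite /phi e1 e0 in H.
lra.
Qed.

Definition BKf {R : realType} {V : lmodType R} (ip : V -> V -> R) (M : V -> V) x y :=
  ip (- M x) y.

Lemma ipnormN {R : realType} {V : lmodType R} (ip : V -> V -> R) x :
  is_inner_product ip -> ipnorm ip (- x) = ipnorm ip x.
Proof. by move=> hip; rewrite -scaleN1r ipnormZ // normrN1 mul1r. Qed.

Theorem theorem3p9 (R : realType) (V : lmodType R) (ip : V -> V -> R)
  (Lop : {linear V -> V}) (f : V -> R) (gradf : V -> V) (L : R)
  (Mop Sop : V -> {linear V -> V}) (alphaM betaS tau A : R)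
  (Pm P0 Phat P1 : V) :
  is_hilbert ip ->
  op_symmetric ip Lop -> op_posdef ip Lop ->
  is_gradient ip f gradf -> 0 <= L -> lipschitz_with ip gradf L ->
  (forall Phi, op_skew ip (Sop Phi)) ->
  (forall Phi, op_symmetric ip (fun x => - Mop Phi x)) ->
  (forall Phi, op_posdef ip (fun x => - Mop Phi x)) ->
  0 < alphaM -> 0 < betaS ->
  (forall Phi Psi1 Psi2, ip (Sop Phi Psi1) Psi2
                         <= betaS * ipnorm ip Psi1 * ipnorm ip Psi2) ->
  (forall Phi Psi, ip (- Mop Phi Psi) Psi >= alphaM * ipnorm ip Psi ^+ 2) ->
  0 < tau -> 0 < A ->
  (let mu := Lop P1 - (tau * A) *: Mop Phat (3 *: P1 - 4 *: P0 + Pm)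
             + 2 *: gradf P0 - gradf Pm in
   (2 * tau)^-1 *: (3 *: P1 - 4 *: P0 + Pm) = Mop Phat mu + Sop Phat mu) ->
  A >= 9 * L ^+ 2 / 8 * (1 + betaS / alphaM) ^+ 2 ->
  let c := (1 + betaS / alphaM)^-1 in
  let dtt := P1 - 2 *: P0 + Pm in
  E_BDF2 ip Lop f L A c P1 P0 - E_BDF2 ip Lop f L A c P0 Pm
  <= - (2 * Num.sqrt (2 * A) * c - 3 * L) * ipnorm ip (P1 - P0) ^+ 2
     - 3 / 2 * Num.sqrt (2 * A) * c * ipnorm ip dtt ^+ 2
     - 4^-1 * half_sq ip Lop dtt.
Proof.
move=> hH hLs hLp hgr L0 hlip hSk hMs hMp a0 b0 hSb hMa tp Ap Hsch HA.
cbv zeta.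
set c := (1 + betaS / alphaM)^-1.
set dtt := P1 - 2 *: P0 + Pm.
have hip := hH.1.
have [hs hl hp hd] := hip.
pose delta := 3 *: P1 - 4 *: P0 + Pm.
pose mu := Lop P1 - (tau * A) *: Mop Phat delta + 2 *: gradf P0 - gradf Pm.
have Hs : (2 * tau)^-1 *: delta = Mop Phat mu + Sop Phat mu := Hsch.
have mudef : mu = Lop P1 - (tau * A) *: Mop Phat delta + 2 *: gradf P0 - gradf Pm by [].
have ddef : delta = 3 *: P1 - 4 *: P0 + Pm by [].
clearbody mu delta.
have t2 : 2 * tau != 0 by rewrite gt_eqF // mulr_gt0.
have hlK : forall a x y z, BKf ip (Mop Phat) (a *: x + y) z
    = a * BKf ip (Mop Phat) x z + BKf ip (Mop Phat) y z.
  by move=> a x y z; rewrite /BKf linearD linearZ opprD -scalerN hl.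
have hsK : forall x y, BKf ip (Mop Phat) x y = BKf ip (Mop Phat) y x.
  by move=> x y; rewrite /BKf hMs hs.
have hpK : forall x, 0 <= BKf ip (Mop Phat) x x.
  move=> x; apply: le_trans (hMa Phat x).
  by apply: mulr_ge0; [exact: ltW | exact: sqr_ge0].
set Y := BKf ip (Mop Phat) mu mu.
set X := BKf ip (Mop Phat) delta delta.
have S1 : ip delta mu = - (2 * tau) * Y.
  have H : ip ((2 * tau)^-1 *: delta) mu = ip (Mop Phat mu + Sop Phat mu) mu by rewrite Hs.
  rewrite (BZl hl) (BDl hl) in H.
  have hS0 : ip (Sop Phat mu) mu = 0.
    have := hSk Phat mu mu; rewrite (hs mu) => ?; lra.
  rewrite hS0 addr0 in H.
  have -> : ip delta mu = (2 * tau) * ((2 * tau)^-1 * ip delta mu) by rewrite mulrA mulfV // mul1r.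
  rewrite H /Y /BKf (BNl hl); ring.
have S2 : ip delta mu = ip delta (Lop P1) + tau * A * X
    + 2 * ip delta (gradf P0) - ip delta (gradf Pm).
  rewrite {1}mudef !(BDr hs hl, BNr hs hl, BZr hs hl) /X /BKf (BNl hl)
    (hs delta (Mop Phat delta)); ring.
have Hd : delta = (2 * tau) *: (Mop Phat mu + Sop Phat mu).
  by rewrite -Hs scalerA mulfV // scale1r.
have S3 : ip delta delta = 2 * tau * (- BKf ip (Mop Phat) mu delta + ip (Sop Phat mu) delta).
  by rewrite {1}Hd (BZl hl) (BDl hl) /BKf (BNl hl) opprK.
set r := Num.sqrt (2 * A).
have rp : 0 < r by rewrite sqrtr_gt0 mulr_gt0.
have r2 : r ^+ 2 = 2 * A by rewrite sqr_sqrtr // ltW // mulr_gt0.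
have A0 : A != 0 by rewrite gt_eqF.
have a00 : alphaM != 0 by rewrite gt_eqF.
pose lam := r / A.
have lp : 0 < lam by rewrite divr_gt0.
have Alam : A * lam = r by rewrite /lam; field.
have Alam2 : A * lam ^+ 2 = 2.
  by rewrite /lam expr_div_n r2; field.
set nm := ipnorm ip mu.
set nd := ipnorm ip delta.
have nm0 : 0 <= nm := ipnorm_ge0 _ _.
have nd0 : 0 <= nd := ipnorm_ge0 _ _.
have F2 := Bamgm hsK hlK hpK lam mu (- delta).
rewrite (BNr hsK hlK) (BNl hlK) (BNr hsK hlK) opprK -/X -/Y in F2.
have F3 : ip (Sop Phat mu) delta <= betaS * nm * nd := hSb Phat mu delta.
have F4 : 2 * lam * nm * nd <= lam ^+ 2 * nm ^+ 2 + nd ^+ 2.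
  have := sqr_ge0 (lam * nm - nd); lra.
have F5a : alphaM * nm ^+ 2 <= Y := hMa Phat mu.
have F5b : alphaM * nd ^+ 2 <= X := hMa Phat delta.
set W := lam ^+ 2 * Y + X.
set k := betaS / alphaM.
have k0 : 0 <= k by rewrite divr_ge0 // ltW.
have F6 : 2 * lam * ip (Sop Phat mu) delta <= k * W.
  have e1 : 2 * lam * ip (Sop Phat mu) delta <= 2 * lam * (betaS * nm * nd).
    apply: ler_wpM2l => //; apply: mulr_ge0 => //; exact: ltW.
  have e2 : betaS * (2 * lam * nm * nd) <= betaS * (lam ^+ 2 * nm ^+ 2 + nd ^+ 2).
    apply: ler_wpM2l => //; exact: ltW.
  have e4 : lam ^+ 2 * (alphaM * nm ^+ 2) <= lam ^+ 2 * Y.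
    apply: ler_wpM2l => //; exact: sqr_ge0.
  have e3 : k * (alphaM * (lam ^+ 2 * nm ^+ 2 + nd ^+ 2)) <= k * W.
    apply: ler_wpM2l => //; rewrite /W; lra.
  have e5 : k * (alphaM * (lam ^+ 2 * nm ^+ 2 + nd ^+ 2)) = betaS * (lam ^+ 2 * nm ^+ 2 + nd ^+ 2).
    by rewrite /k; field.
  lra.
have e6 : lam * ip delta delta <= tau * ((1 + k) * W).
  have -> : lam * ip delta delta = tau * (2 * lam * (- BKf ip (Mop Phat) mu delta)
     + 2 * lam * ip (Sop Phat mu) delta) by rewrite S3; ring.
  apply: ler_wpM2l; first exact: ltW.
  rewrite /W in F6 *; lra.
have k1 : 1 + k != 0 by rewrite gt_eqF // ltr_pwDl.
have Key3 : r * c * ip delta delta <= tau * (2 * Y + A * X).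
  have e7 : c * (lam * ip delta delta) <= c * (tau * ((1 + k) * W)).
    apply: ler_wpM2l => //; rewrite /c invr_ge0; apply: addr_ge0 => //.
  have k1' : 1 + betaS / alphaM != 0 := k1.
  have e8 : c * (tau * ((1 + k) * W)) = tau * W.
    rewrite /c /k; field; rewrite a00 /= gt_eqF // addr_gt0 //.
  have e9 : A * (c * (lam * ip delta delta)) <= A * (tau * W).
    apply: ler_wpM2l; [exact: ltW | lra].
  have -> : r * c * ip delta delta = A * (c * (lam * ip delta delta)).
    by rewrite -Alam; ring.
  have <- : A * (tau * W) = tau * (2 * Y + A * X).
    by rewrite /W -Alam2; ring.
  exact: e9.
pose G := 2 * ip delta (gradf P0) - ip delta (gradf Pm).
have Key : ip delta (Lop P1) <= - (r * c) * ip delta delta - G.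
  rewrite /G; lra.
have D1 := descent _ _ _ _ hip hgr L0 hlip P0 P1.
have D2 := descent _ _ _ _ hip hgr L0 hlip P0 Pm.
have C1 : ip (- (P1 - P0)) (gradf P0 - gradf Pm)
    <= ipnorm ip (P1 - P0) * (L * ipnorm ip (P0 - Pm)).
  apply: (le_trans (ipCS _ _ _ hip)); rewrite ipnormN //.
  apply: ler_wpM2l; [exact: ipnorm_ge0 | exact: hlip].
have C2 : ip (P0 - Pm) (gradf P0 - gradf Pm)
    <= ipnorm ip (P0 - Pm) * (L * ipnorm ip (P0 - Pm)).
  apply: (le_trans (ipCS _ _ _ hip)).
  apply: ler_wpM2l; [exact: ipnorm_ge0 | exact: hlip].
have AM : L * (2 * (ipnorm ip (P1 - P0) * ipnorm ip (P0 - Pm)))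
    <= L * (ipnorm ip (P1 - P0) ^+ 2 + ipnorm ip (P0 - Pm) ^+ 2).
  apply: ler_wpM2l => //.
  have := sqr_ge0 (ipnorm ip (P1 - P0) - ipnorm ip (P0 - Pm)); lra.
have Emv : Pm - P0 = - (P0 - Pm) by rewrite opprB.
rewrite Emv !(BNl hl) !(BNr hs hl) !opprK in D2.
rewrite !(ipnorm_sq _ _ hip) in AM.
have Ev : ipnorm ip (P0 - Pm) * (L * ipnorm ip (P0 - Pm)) = L * ip (P0 - Pm) (P0 - Pm).
  by rewrite -(ipnorm_sq _ _ hip); ring.
rewrite Ev in C2.
rewrite (hs (gradf P0)) in D1.
rewrite (hs (gradf P0)) in D2.
set Nu := ip (P1 - P0) (P1 - P0) in D1 AM *.
set Nv := ip (P0 - Pm) (P0 - Pm) in D2 AM C2 *.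
set nu := ipnorm ip (P1 - P0) in C1 AM *.
set nv := ipnorm ip (P0 - Pm) in C1 AM *.
have Hf : 3 / 2 * f P1 - 2 * f P0 + 2^-1 * f Pm - 2^-1 * G <= 3 * L / 2 * (Nu + Nv).
  rewrite /G ddef.
  rewrite !(BDl hl, BNl hl, BZl hl, BDr hs hl, BNr hs hl, BZr hs hl) in D1 D2 C1 C2 *.
  lra.
have K1 : 4^-1 * ip P1 (Lop P1) + 4^-1 * ip (2 *: P1 - P0) (Lop (2 *: P1 - P0))
   - 4^-1 * ip P0 (Lop P0) - 4^-1 * ip (2 *: P0 - Pm) (Lop (2 *: P0 - Pm))
   + 4^-1 * ip dtt (Lop dtt) = 2^-1 * ip delta (Lop P1).
  have l01 : ip P0 (Lop P1) = ip P1 (Lop P0) by rewrite hs hLs.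
  have l0m : ip Pm (Lop P0) = ip P0 (Lop Pm) by rewrite hs hLs.
  have l1m : ip Pm (Lop P1) = ip P1 (Lop Pm) by rewrite hs hLs.
  rewrite /dtt ddef !linearD !linearN !linearZ.
  rewrite !(BDl hl, BNl hl, BZl hl, BDr hs hl, BNr hs hl, BZr hs hl).
  lra.
have K5 : ip delta delta = 2 * (3 * Nu - Nv + 3 / 2 * ip dtt dtt).
  have i01 := hs P0 P1. have i0m := hs Pm P0. have i1m := hs Pm P1.
  rewrite /Nu /Nv /dtt ddef.
  rewrite !(BDl hl, BNl hl, BZl hl, BDr hs hl, BNr hs hl, BZr hs hl).
  lra.
have K5' : r * c * ip delta delta
    = 6 * (r * c * Nu) - 2 * (r * c * Nv) + 3 * (r * c * ip dtt dtt).
  by rewrite K5; field.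
have nu2 : nu ^+ 2 = Nu by rewrite /nu /Nu ipnorm_sq.
have nv2 : nv ^+ 2 = Nv by rewrite /nv /Nv ipnorm_sq.
have nd2 : ipnorm ip dtt ^+ 2 = ip dtt dtt by rewrite ipnorm_sq.
rewrite /E_BDF2 /half_sq -/nu -/nv nu2 nv2 nd2.
rewrite -/r. lra.
Qed.
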